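(* Let $f$ be a multiplicative function from the positive integers to the nonnegative integers with $f(p^{k-1})\le f(p^k)$ for all primes $p$ and all integers $k\ge 1$. Then every $f$-practical number is weakly $f$-practical.
   Context: $f$ multiplicative means $f(1)=1$ and $f(ab)=f(a)f(b)$ for coprime $a,b$. $S_f(n)=\sum_{d\mid n} f(d)$. A positive integer $n$ is $f$-practical if every positive integer $m\le S_f(n)$ equals $\sum_{d\in\mathcal{D}}f(d)$ for some set $\mathcal{D}$ of distinct divisors of $n$. Write $n=p_1^{e_1}\cdots p_k^{e_k}$ with distinct primes ordered so that $f(p_1)\le f(p_2)\le\cdots\le f(p_k)$, and let $m_i=\prod_{j=1}^{i}p_j^{e_j}$ for $0\le i<k$ (so $m_0=1$). Then $n$ is called weakly $f$-practical if $f(p_{i+1})\le S_f(m_i)+1$ for every $0\le i<k$. *)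

(* Defs.v *)
From mathcomp Require Import all_boot.
Set Implicit Arguments.
Unset Strict Implicit.
Unset Printing Implicit Defensive.

Definition multiplicative (f : nat -> nat) : Prop :=
  f 1 = 1 /\ forall a b, 0 < a -> 0 < b -> coprime a b -> f (a * b) = f a * f b.

Definition Sf (f : nat -> nat) (n : nat) : nat := \sum_(d <- divisors n) f d.

Definition f_practical (f : nat -> nat) (n : nat) : Prop :=
  0 < n /\
  forall m, 0 < m -> m <= Sf f n ->
    exists D : seq nat, [/\ uniq D, all (fun d => d %| n) D &
                            \sum_(d <- D) f d = m].

Definition mpart (s : seq nat) (n i : nat) : nat :=
  \prod_(p <- take i s) p ^ logn p n.

(* n is weakly f-practical: for the ordering p_1,...,p_k of the distinct prime
   divisors of n with f(p_1) <= ... <= f(p_k), f(p_{i+1}) <= S_f(m_i) + 1 for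
   all 0 <= i < k.  (Quantified over every such ordering.) *)
Definition weakly_f_practical (f : nat -> nat) (n : nat) : Prop :=
  0 < n /\
  forall s : seq nat, perm_eq s (primes n) ->
    sorted (fun p q => f p <= f q) s ->
    forall i, i < size s -> f (nth 0 s i) <= Sf f (mpart s n i) + 1.

(* Main.v *)
Require Import Defs.
From mathcomp Require Import all_boot.

Lemma sum_uniq_sub (f : nat -> nat) (D L : seq nat) (P : pred nat) :
  uniq D -> uniq L -> (forall d, d \in D -> P d -> d \in L) ->
  \sum_(d <- D | P d) f d <= \sum_(d <- L) f d.
Proof.
move=> uD uL sub.
rewrite -big_filter.
have pe : perm_eq (filter P D) (filter (fun d => d \in filter P D) L).
  apply: uniq_perm; [exact: filter_uniq | exact: filter_uniq |].
  move=> x; rewrite mem_filter; apply/idP/idP => [h|/andP[]//].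
  by rewrite h /=; move: h; rewrite mem_filter => /andP[Px xD]; apply: sub.
rewrite (perm_big _ pe) big_filter big_mkcond /=.
by apply: leq_sum => i _; case: ifP.
Qed.

Lemma term_le_sum (r : seq nat) x (P : pred nat) (F : nat -> nat) :
  x \in r -> P x -> F x <= \sum_(i <- r | P i) F i.
Proof. by move=> xr Px; rewrite (big_rem _ xr) Px leq_addr. Qed.

Lemma mono_pow (f : nat -> nat) p :
  (forall p k, prime p -> 0 < k -> f (p ^ (k - 1)) <= f (p ^ k)) ->
  prime p -> forall k, 0 < k -> f p <= f (p ^ k).
Proof.
move=> H pp; elim=> [//|k IH] _.
case: k IH => [|k] IH; first by rewrite expn1.
apply: leq_trans (IH isT) _.
by have := H p k.+2 pp isT; rewrite subn1.
Qed.

Theorem theorem2p2 (f : nat -> nat) :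
  multiplicative f ->
  (forall p k, prime p -> 0 < k -> f (p ^ (k - 1)) <= f (p ^ k)) ->
  forall n : nat, f_practical f n -> weakly_f_practical f n.
Proof.
move=> [f1 fM] Hmon n [n0 Hpr]; split=> // s ps ss i iS.
set M := mpart s n i.
set q := nth 0 s i.
rewrite leqNgt; apply/negP => Hq.
have qs : q \in s by apply: mem_nth.
have qn : q \in primes n by rewrite -(perm_mem ps).
move: (qn); rewrite mem_primes => /and3P[qp _ qdn].
have leqS : f q <= Sf f n.
  rewrite /Sf -(big_filter _ predT) filter_predT.
  apply: (@term_le_sum (divisors n) q predT f); last by [].
  by rewrite -dvdn_divisors.
have [D [uD aD sD]] := Hpr (Sf f M + 1) ltac:(by rewrite addn1) (ltnW (leq_trans Hq leqS)).
set pi := [pred p | p \in take i s].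
have divM : forall d, d %| n -> pi.-nat d -> d %| M.
  move=> d dn pid.
  have d0 : 0 < d by apply: dvdn_gt0 dn.
  apply/dvdn_partP => // p pd.
  have pt : p \in take i s by apply: (pnatPpi pid).
  apply: (@dvdn_trans (n`_p)); first exact: partn_dvd.
  rewrite p_part /M /mpart (big_rem _ pt) /=; exact: dvdn_mulr.
have big_or : forall d, d %| n -> ~~ (d %| M) -> 0 < f d -> f q <= f d.
  move=> d dn ndM fd0.
  have d0 : 0 < d by apply: dvdn_gt0 dn.
  have : ~~ pi.-nat d by apply: contra ndM; apply: divM.
  rewrite /pnat d0 /= => /allPn [p pd ppi].
  move: (pd); rewrite mem_primes => /and3P[pp _ pdd].
  have pn : p \in primes n by rewrite mem_primes pp n0 (dvdn_trans pdd dn).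
  have ps' : p \in s by rewrite (perm_mem ps).
  have ij : i <= index p s.
    rewrite leqNgt; apply/negP => ji; move: ppi; rewrite /= => /negP; apply.
    have <- : nth 0 (take i s) (index p s) = p by rewrite nth_take // nth_index.
    apply: mem_nth; rewrite size_take; case: ifP => //.
    by rewrite index_mem.
  have fqp : f q <= f p.
    have := @sorted_leq_nth nat (fun p q => f p <= f q) (fun a b c => @leq_trans (f a) (f b) (f c)) (fun a => leqnn (f a)) 0 s ss i (index p s).
    rewrite nth_index //; apply => //; rewrite inE ?index_mem //.
  apply: (leq_trans fqp).
  have fpp : f p <= f (d`_p).
    by rewrite p_part; apply: mono_pow => //; rewrite logn_gt0.
  apply: (leq_trans fpp).
  have -> : f d = f d`_p * f d`_p^'.
    by rewrite -{1}(partnC p d0) fM ?part_gt0 ?coprime_partC.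
  move: fd0; rewrite -{1}(partnC p d0) fM ?part_gt0 ?coprime_partC //.
  case: (f (d`_p^')) => [|k]; rewrite ?muln0 // => _.
  by rewrite leq_pmulr.
have hD : forall d, d \in D -> d %| n by move=> d /(allP aD).
have M0 : 0 < M.
  rewrite /M /mpart big_seq; elim/big_rec: _ => // p m /mem_take pS mgt.
  rewrite muln_gt0 mgt andbT expn_gt0; apply/orP; left; apply: prime_gt0.
  by move: pS; rewrite (perm_mem ps) mem_primes => /andP[].
move: sD; rewrite (bigID (fun d => d %| M)) /= => sD.
have A_le : \sum_(d <- D | d %| M) f d <= Sf f M.
  apply: sum_uniq_sub => //; first exact: divisors_uniq.
  by move=> d _ dM; rewrite -dvdn_divisors.
have B0 : \sum_(d <- D | ~~ (d %| M)) f d = 0.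
  apply: big1_seq => d /andP[ndM dD].
  case: (posnP (f d)) => // fd0; exfalso.
  have := big_or d (hD d dD) ndM fd0.
  have := @term_le_sum D d (fun d => ~~ (d %| M)) f dD ndM.
  move: Hq; rewrite -sD.
  move=> h1 h2 h3.
  have h4 := leq_trans h3 h2.
  have h5 := leq_trans h4 (leq_addl (\sum_(i <- D | i %| M) f i) _).
  by move: (leq_ltn_trans h5 h1); rewrite ltnn.
move: sD; rewrite B0 addn0 => sD.
by move: A_le; rewrite sD addn1 ltnn.
Qed.
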